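(* For all positive integers $n$ and all integers $m,k\ge 0$: $\Omega(n,k;m)\ge\Omega(n,k+1;m)$, $\Omega^*(n,k;m)\ge\Omega^*(n,k+1;m)$, and $\Omega^+(n,k;m)\ge\Omega^+(n,k+1;m)$.
   Context: Integers are written with $\bar i=-i$, totally ordered by $0<_{\mathbb Z}\bar1<_{\mathbb Z}1<_{\mathbb Z}\bar2<_{\mathbb Z}2<_{\mathbb Z}\cdots$, and $|\bar j|=j$. Write $a\prec_+ b$ if $a<_{\mathbb Z}b$ or $a=b\in\{0,1,2,\ldots\}$, and $a\prec_- b$ if $a<_{\mathbb Z}b$ or $a=b\in\{\bar1,\bar2,\ldots\}$. A permutation $\pi\in S_n$ is identified with the chain $\pi(1)<_\pi\cdots<_\pi\pi(n)$; a $\pi$-partition is a map $f:[n]\to\mathbb Z$ such that for each $1\le i<n$, $f(\pi(i))\prec_+ f(\pi(i+1))$ if $\pi(i)<\pi(i+1)$ and $f(\pi(i))\prec_- f(\pi(i+1))$ if $\pi(i)>\pi(i+1)$. $\Omega_\pi(m)$ counts $\pi$-partitions with $|f(i)|\le m$ for all $i$; $\Omega^*_\pi(m)$ counts those that additionally never take value $0$; $\Omega^+_\pi(m)$ counts those with all values in $\{1,\ldots,m\}$. Statistics: $\mathrm{des}(\pi)=|\{i: \pi(i)>\pi(i+1)\}|$; $\mathrm{pk}(\pi)=|\{2\le i\le n-1:\pi(i-1)<\pi(i)>\pi(i+1)\}|$; $\mathrm{lpk}(\pi)$ is the number of peaks of $\pi$ with the convention $\pi(0)=0$ (i.e. also counting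 $i=1$ if $\pi(1)>\pi(2)$). It is known that $\Omega_\pi(m)$ depends only on $n$ and $\mathrm{lpk}(\pi)$, $\Omega^*_\pi(m)$ only on $n$ and $\mathrm{pk}(\pi)$, and $\Omega^+_\pi(m)$ only on $n$ and $\mathrm{des}(\pi)$. Define $\Omega(n,k;m)=\Omega_\pi(m)$ for any $\pi\in S_n$ with $\mathrm{lpk}(\pi)=k$, $\Omega^*(n,k;m)=\Omega^*_\pi(m)$ for any $\pi$ with $\mathrm{pk}(\pi)=k$, $\Omega^+(n,k;m)=\Omega^+_\pi(m)$ for any $\pi$ with $\mathrm{des}(\pi)=k$, each defined to be $0$ if no such permutation exists. *)

(* Defs.v *)
From mathcomp Require Import all_boot all_order all_algebra all_fingroup.
Set Implicit Arguments. Unset Strict Implicit. Unset Printing Implicit Defensive.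
Import Order.TTheory GRing.Theory Num.Theory.

(* Permutations of [n] are modelled as elements of 'S_n, acting on
   {0,...,n-1}; the chain is pi(0) <_pi ... <_pi pi(n-1) (0-indexed).
   Shifting the letters by one does not change any comparison. *)

(* Position of an integer in the total order 0 < -1 < 1 < -2 < 2 < ... *)
Definition zkey (z : int) : nat :=
  if (0 <= z)%R then (2 * `|z|)%N else (2 * `|z|).-1.

Definition zlt (a b : int) : bool := (zkey a < zkey b)%N.
Definition zprec_plus (a b : int) : bool := zlt a b || ((a == b) && (0 <= a)%R).
Definition zprec_minus (a b : int) : bool := zlt a b || ((a == b) && (a < 0)%R).

Definition is_pi_partition (n : nat) (pi : 'S_n) (f : 'I_n -> int) : bool :=
  [forall i : 'I_n, forall j : 'I_n, (j == i.+1 :> nat) ==>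
     (if (pi i < pi j)%N then zprec_plus (f (pi i)) (f (pi j))
      else zprec_minus (f (pi i)) (f (pi j)))].

(* encoding of {-m,...,m} by 'I_(2m+1) : v |-> v - m *)
Definition dec (m : nat) (v : 'I_(2 * m + 1)) : int := (v%:Z - m%:Z)%R.

Definition OmegaPi (n : nat) (pi : 'S_n) (m : nat) : nat :=
  #|[set g : {ffun 'I_n -> 'I_(2 * m + 1)} |
      is_pi_partition pi (fun i => dec (g i))]|.

Definition OmegaStarPi (n : nat) (pi : 'S_n) (m : nat) : nat :=
  #|[set g : {ffun 'I_n -> 'I_(2 * m + 1)} |
      is_pi_partition pi (fun i => dec (g i)) &&
      [forall i, dec (g i) != 0%R]]|.

Definition OmegaPlusPi (n : nat) (pi : 'S_n) (m : nat) : nat :=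
  #|[set g : {ffun 'I_n -> 'I_(2 * m + 1)} |
      is_pi_partition pi (fun i => dec (g i)) &&
      [forall i, (0 < dec (g i))%R]]|.

Definition des (n : nat) (pi : 'S_n) : nat :=
  #|[set i : 'I_n | [exists j : 'I_n, (j == i.+1 :> nat) && (pi j < pi i)%N]]|.

Definition pk (n : nat) (pi : 'S_n) : nat :=
  #|[set i : 'I_n |
      [exists h : 'I_n, (h.+1 == i :> nat) && (pi h < pi i)%N] &&
      [exists j : 'I_n, (j == i.+1 :> nat) && (pi j < pi i)%N]]|.

(* peaks with the convention pi(0) = 0 (below every letter): the first
   position also counts when pi(first) > pi(second) *)
Definition lpk (n : nat) (pi : 'S_n) : nat :=
  #|[set i : 'I_n |
      ((i == 0%N :> nat) ||
       [exists h : 'I_n, (h.+1 == i :> nat) && (pi h < pi i)%N]) &&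
      [exists j : 'I_n, (j == i.+1 :> nat) && (pi j < pi i)%N]]|.

(* Omega(n,k;m) etc: value for any pi with the statistic equal to k, 0 if none *)
Definition Omega (n k m : nat) : nat :=
  if [pick pi : 'S_n | lpk pi == k] is Some pi then OmegaPi pi m else 0.
Definition OmegaStar (n k m : nat) : nat :=
  if [pick pi : 'S_n | pk pi == k] is Some pi then OmegaStarPi pi m else 0.
Definition OmegaPlus (n k m : nat) : nat :=
  if [pick pi : 'S_n | des pi == k] is Some pi then OmegaPlusPi pi m else 0.

(* Main.v *)
Require Import Defs.
From mathcomp Require Import all_boot all_order all_algebra all_fingroup.
From mathcomp Require Import zify.
Set Implicit Arguments. Unset Strict Implicit. Unset Printing Implicit Defensive.

Section Ops.
Variable (R : bool -> nat -> nat -> bool) (N : nat).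
Definition step x (v : nat -> nat) a := \sum_(b < N) R x a b * v b.
Fixpoint opw (w : seq bool) (v : nat -> nat) : nat -> nat :=
  if w is x :: w' then step x (opw w' v) else v.

Lemma opw_cat w1 w2 v : opw (w1 ++ w2) v = opw w1 (opw w2 v).
Proof. by elim: w1 => //= x w1 ->. Qed.

Lemma step_mono x v v' a : (forall b, v b <= v' b) -> step x v a <= step x v' a.
Proof. by move=> H; apply: leq_sum => b _; apply: leq_mul. Qed.

Lemma step_ext x v v' a : (forall b, v b = v' b) -> step x v a = step x v' a.
Proof. by move=> H; apply: eq_bigr => b _; rewrite H. Qed.

Lemma opw_mono w v v' a : (forall b, v b <= v' b) -> opw w v a <= opw w v' a.
Proof. by elim: w a => //= x w IH a H; apply: step_mono => b; apply: IH. Qed.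

Lemma opw_ext w v v' a : (forall b, v b = v' b) -> opw w v a = opw w v' a.
Proof. by elim: w a => //= x w IH a H; apply: step_ext => b; apply: IH. Qed.
End Ops.

Lemma sum_shift N (h g : nat -> nat) : h 0 = 0 -> (forall b, h b.+1 = g b) ->
  g N.-1 = 0 -> \sum_(b < N) h b = \sum_(b < N) g b.
Proof.
case: N => [|N] h0 hg gN; first by rewrite !big_ord0.
rewrite big_ord_recl h0 add0n big_ord_recr /= gN addn0.
by apply: eq_bigr => i _; rewrite hg.
Qed.

Lemma sum_shift_le N (h g : nat -> nat) : h 0 = 0 -> (forall b, h b.+1 <= g b) ->
  \sum_(b < N) h b <= \sum_(b < N) g b.
Proof.
case: N => [|N] h0 hg; first by rewrite !big_ord0.
rewrite big_ord_recl h0 add0n big_ord_recr /=.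
apply: leq_trans (leq_addr _ _); apply: leq_sum => i _; exact: hg.
Qed.

Lemma sum_exch N (f : 'I_N -> 'I_N -> nat) (v : 'I_N -> nat) :
  \sum_(b < N) \sum_(d < N) f b d * v d = \sum_(d < N) v d * \sum_(b < N) f b d.
Proof.
rewrite exchange_big /=; apply: eq_bigr => d _; rewrite big_distrr /=.
by apply: eq_bigr => b _; rewrite mulnC.
Qed.

Lemma sum_eq1 N (f : nat -> nat) b : b < N -> \sum_(c < N) (val c == b) * f c = f b.
Proof.
move=> hb; rewrite (bigD1 (Ordinal hb)) //= eqxx mul1n big1 ?addn0 // => c.
by rewrite -val_eqE /= => /negbTE ->.
Qed.

Definition Pr (x : bool) (a b : nat) : bool := (a < b) || ((a == b) && (odd a != x)).

Lemma Pr_split x a b : Pr x a b = (a < b) + (b == a) * (odd a != x) :> nat.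
Proof.
rewrite /Pr eq_sym; case: (ltngtP a b) => h /=; rewrite ?h ?eqxx //=.
by case: (odd b != x).
Qed.

Lemma stepPr N x u b : b < N ->
  step Pr N x u b + (odd b == x) * u b = step Pr N (~~x) u b + (odd b != x) * u b.
Proof.
move=> hb; rewrite /step.
have E y : \sum_(c < N) Pr y b c * u c =
   \sum_(c < N) (b < c) * u c + \sum_(c < N) (val c == b) * ((odd b != y) * u c).
  rewrite -big_split /=; apply: eq_bigr => c _; rewrite Pr_split mulnDl mulnA.
  by rewrite eq_sym.
rewrite !E (sum_eq1 (fun c => (odd b != x) * u c)) //.
rewrite (sum_eq1 (fun c => (odd b != ~~x) * u c)) //; case: x; case: (odd b) => /=; lia.
Qed.

Lemma PrI1 N x v a : step Pr N x (step Pr N x (step Pr N (~~x) v)) a =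
                     step Pr N x (step Pr N (~~x) (step Pr N (~~x) v)) a.
Proof.
set W := step Pr N (~~x) v.
have key : \sum_(b < N) Pr x a b * ((odd b == x) * W b) =
           \sum_(b < N) Pr x a b * ((odd b != x) * W b).
  have E y : \sum_(b < N) Pr x a b * ((odd b == y) * W b) =
     \sum_(b < N) \sum_(d < N) (Pr x a b * (odd b == y) * Pr (~~x) b d) * v d.
    apply: eq_bigr => b _; rewrite /W /step big_distrr /= big_distrr /=.
    by apply: eq_bigr => d _; rewrite !mulnA.
  have E' : \sum_(b < N) Pr x a b * ((odd b != x) * W b) =
     \sum_(b < N) \sum_(d < N) (Pr x a b * (odd b != x) * Pr (~~x) b d) * v d.
    apply: eq_bigr => b _; rewrite /W /step big_distrr /= big_distrr /=.
    by apply: eq_bigr => d _; rewrite !mulnA.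
  rewrite E E' !sum_exch; apply: eq_bigr => d _; congr (_ * _).
  apply: (@sum_shift N (fun b => Pr x a b * (odd b == x) * Pr (~~x) b d)
                       (fun b => Pr x a b * (odd b != x) * Pr (~~x) b d)).
  - by clear E E' W; rewrite /Pr; case: x; lia.
  - by clear E E' W; move=> b; rewrite /Pr; case: x; lia.
  - clear E E' W; have := ltn_ord d; rewrite /Pr; case: x; lia.
have E : \sum_(b < N) Pr x a b * step Pr N x W b + \sum_(b < N) Pr x a b * ((odd b == x) * W b)
       = \sum_(b < N) Pr x a b * step Pr N (~~x) W b + \sum_(b < N) Pr x a b * ((odd b != x) * W b).
  rewrite -!big_split /=; apply: eq_bigr => b _; rewrite -!mulnDr.
  by rewrite stepPr.
rewrite key in E.
change (\sum_(b < N) Pr x a b * step Pr N x W b = \sum_(b < N) Pr x a b * step Pr N (~~x) W b); lia.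
Qed.

Lemma PrI2 N v a : step Pr N true (step Pr N false (step Pr N true v)) a <=
                   step Pr N true (step Pr N true (step Pr N true v)) a.
Proof.
set W := step Pr N true v.
have key : \sum_(b < N) Pr true a b * ((odd b == true) * W b) <=
           \sum_(b < N) Pr true a b * ((odd b != true) * W b).
  have E y : \sum_(b < N) Pr true a b * ((odd b == y) * W b) =
     \sum_(b < N) \sum_(d < N) (Pr true a b * (odd b == y) * Pr true b d) * v d.
    apply: eq_bigr => b _; rewrite /W /step big_distrr /= big_distrr /=.
    by apply: eq_bigr => d _; rewrite !mulnA.
  have E' : \sum_(b < N) Pr true a b * ((odd b != true) * W b) =
     \sum_(b < N) \sum_(d < N) (Pr true a b * (odd b != true) * Pr true b d) * v d.
    apply: eq_bigr => b _; rewrite /W /step big_distrr /= big_distrr /=.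
    by apply: eq_bigr => d _; rewrite !mulnA.
  rewrite E E' !sum_exch; apply: leq_sum => d _; apply: leq_mul => //.
  apply: (@sum_shift_le N (fun b => Pr true a b * (odd b == true) * Pr true b d)
                       (fun b => Pr true a b * (odd b != true) * Pr true b d)).
  - by rewrite /Pr; lia.
  - by move=> b; rewrite /Pr; lia.
have E : \sum_(b < N) Pr true a b * step Pr N true W b + \sum_(b < N) Pr true a b * ((odd b == true) * W b)
       = \sum_(b < N) Pr true a b * step Pr N (~~true) W b + \sum_(b < N) Pr true a b * ((odd b != true) * W b).
  rewrite -!big_split /=; apply: eq_bigr => b _; rewrite -!mulnDr.
  by rewrite stepPr.
change (\sum_(b < N) Pr true a b * step Pr N false W b <= \sum_(b < N) Pr true a b * step Pr N true W b); move: E key; rewrite /=; lia.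
Qed.

Lemma step2E R N x y v a : step R N x (step R N y v) a =
   \sum_(d < N) v d * \sum_(b < N) (R x a b * R y b d).
Proof.
rewrite /step (eq_bigr (fun b : 'I_N => \sum_(d<N) (R x a b * R y b d) * v d)).
  by rewrite sum_exch.
by move=> b _; rewrite big_distrr /=; apply: eq_bigr => d _; rewrite mulnA.
Qed.

Definition Pl (x : bool) (a b : nat) : bool := if x then a <= b else a < b.

Lemma Pl_comm N v a : step Pl N true (step Pl N false v) a = step Pl N false (step Pl N true v) a.
Proof.
rewrite !step2E; apply: eq_bigr => d _; congr (_ * _).
symmetry; apply: (@sum_shift N (fun b => Pl false a b * Pl true b d)
                        (fun b => Pl true a b * Pl false b d)).
- by rewrite /Pl; lia.
- by move=> b; rewrite /Pl; lia.
- have := ltn_ord d; rewrite /Pl; lia.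
Qed.

Lemma Pl_le N u a : step Pl N false u a <= step Pl N true u a.
Proof. apply: leq_sum => b _; apply: leq_mul => //; rewrite /Pl; lia. Qed.

Fixpoint runs (w : seq bool) : nat :=
  match w with
  | [::] => 0
  | x :: w' => if w' is y :: _ then (x != y) + runs w' else 1
  end.

Fixpoint pkw (w : seq bool) : nat :=
  match w with
  | [::] => 0
  | x :: w' => if w' is y :: _ then (x && ~~ y) + pkw w' else 0
  end.

Fixpoint can (x : bool) (t L : nat) : seq bool :=
  match t with
  | S (S t' as t1) => x :: can (~~ x) t1 L.-1
  | _ => nseq L x
  end.

Lemma runs_le w : runs w <= size w.
Proof. elim: w => //= x [|y w] //= IH; lia. Qed.

Lemma runs_pos x w : 0 < runs (x :: w).
Proof. by elim: w x => //= y w IH x; have := IH y; lia. Qed.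

Lemma runs_pk x w : runs (x :: w) + ~~ last x w = 2 * pkw (x :: w) + 1 + ~~ x.
Proof.
elim: w x => [|y w IH] x /=; first by case: x.
move: (IH y) => /=; case: w IH => [|z w] IH /=; case: x; case: y => /=; lia.
Qed.

Lemma can_head x t L : 0 < L -> exists r, can x t L = x :: r.
Proof.
case: t => [|[|t]] /=; case: L => // L _; by eexists.
Qed.

Section Canon.
Variable (R : bool -> nat -> nat -> bool) (N : nat).
Hypothesis I1 : forall x v a, step R N x (step R N x (step R N (~~x) v)) a =
                     step R N x (step R N (~~x) (step R N (~~x) v)) a.

Lemma can_cons t : forall x L v a, 0 < t -> t <= L ->
  step R N x (opw R N (can x t L) v) a = opw R N (can x t L.+1) v a.
Proof.
elim: t => [|t IH] // x L v a _ htL.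
case: t IH htL => [|t] IH htL; first by [].
change (step R N x (step R N x (opw R N (can (~~x) t.+1 L.-1) v)) a =
        step R N x (opw R N (can (~~x) t.+1 L) v) a).
case: L htL => [|L] htL //.
change (step R N x (step R N x (opw R N (can (~~x) t.+1 L) v)) a =
        step R N x (opw R N (can (~~x) t.+1 L.+1) v) a).
have [r hr] : exists r, can (~~x) t.+1 L = ~~ x :: r by apply: can_head; lia.
rewrite hr.
change (step R N x (step R N x (step R N (~~x) (opw R N r v))) a =
        step R N x (opw R N (can (~~x) t.+1 L.+1) v) a).
rewrite I1; apply: step_ext => b.
rewrite -(IH (~~x) L v b) ?hr //; lia.
Qed.

Lemma canon v w : forall x a, opw R N (x :: w) v a = opw R N (can x (runs (x :: w)) (size w).+1) v a.
Proof.
elim: w => [|y w IH] x a; first by [].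
change (step R N x (opw R N (y :: w) v) a =
        opw R N (can x ((x != y) + runs (y :: w)) (size w).+2) v a).
have hr := runs_pos y w; have hl := runs_le (y :: w).
rewrite (@step_ext R N x _ _ a (IH y)).
case: (eqVneq x y) => [exy|hxy].
- subst y; rewrite add0n can_cons //.
- have ey : y = ~~ x by move: hxy; case: (x); case: (y).
  subst y; rewrite [~~ false]/= add1n; move: hr; set t := runs _; case: t => [|t] //= _.
Qed.

Hypothesis I2 : forall v a, step R N true (step R N false (step R N true v)) a <=
                   step R N true (step R N true (step R N true v)) a.

Lemma mono_can t : forall x L v a, 0 < t -> x = odd t -> t.+2 <= L ->
  opw R N (can x t.+2 L) v a <= opw R N (can x t L) v a.
Proof.
elim: t => [|t IH] // x L v a _ hx hL.
case: t IH hx hL => [|t] IH hx hL.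
- rewrite hx /=.
  case: L hL => [|[|[|L]]] // _ /=.
  exact: I2.
- change (step R N x (opw R N (can (~~x) t.+3 L.-1) v) a <=
          step R N x (opw R N (can (~~x) t.+1 L.-1) v) a).
  apply: step_mono => b; apply: IH => //=; first by rewrite hx /=; case: (odd t).
  lia.
Qed.
End Canon.

Lemma Pl_commD N p u a : step Pl N false (opw Pl N (nseq p true) u) a =
   opw Pl N (nseq p true) (step Pl N false u) a.
Proof.
elim: p a => [|p IH] a //=.
rewrite -Pl_comm; apply: step_ext => b; exact: IH.
Qed.

Lemma Pl_sorted N w v a :
  opw Pl N w v a = opw Pl N (nseq (count id w) true ++ nseq (count negb w) false) v a.
Proof.
elim: w a => [|x w IH] a //=.
rewrite (@step_ext Pl N x _ _ a IH).
case: x => /=; first by [].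
rewrite !add0n !opw_cat.
by rewrite Pl_commD.
Qed.

Lemma Pl_main N w1 w2 v a : size w1 = size w2 ->
  count negb w1 = (count negb w2).+1 -> opw Pl N w1 v a <= opw Pl N w2 v a.
Proof.
move=> hs hc; rewrite (Pl_sorted _ w1) (Pl_sorted _ w2).
have h1 := count_predC id w1; have h2 := count_predC id w2.
have -> : count id w2 = count id w1 + 1.
  have e1 : count (predC id) w1 = count negb w1 by [].
  have e2 : count (predC id) w2 = count negb w2 by [].
  lia.
rewrite hc nseqD -catA !opw_cat; apply: opw_mono => b /=.
exact: Pl_le.
Qed.

Lemma pkw_rcons x w : pkw (x :: rcons w true) = pkw (x :: w).
Proof.
elim: w x => [|y w IH] x; first by rewrite /= andbF.
rewrite rcons_cons; have := IH y; case: w IH => [|z w] IH /=; lia.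
Qed.

Lemma PQ_main N x0 w1 w2 v a : size w1 = size w2 ->
  pkw (x0 :: w1) = (pkw (x0 :: w2)).+1 ->
  opw Pr N (x0 :: rcons w1 true) v a <= opw Pr N (x0 :: rcons w2 true) v a.
Proof.
move=> hs hp.
have hI1 := @PrI1 N; have hI2 := @PrI2 N.
rewrite !(canon hI1).
have r1 := runs_pk x0 (rcons w1 true); have r2 := runs_pk x0 (rcons w2 true).
rewrite !last_rcons !pkw_rcons in r1 r2.
have l1 := runs_le (x0 :: rcons w1 true).
rewrite [size _]/= size_rcons in l1.
rewrite !size_rcons hs.
have -> : runs (x0 :: rcons w1 true) = (2 * pkw (x0 :: w2) + 1 + ~~ x0).+2 by lia.
have -> : runs (x0 :: rcons w2 true) = 2 * pkw (x0 :: w2) + 1 + ~~ x0 by lia.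
apply: mono_can => //; try lia; case: x0 {r1 r2} => /=; lia.
Qed.

Lemma pkw_le_true y w : pkw (y :: w) <= pkw (true :: w).
Proof. case: w => [|z w] //=; case: y => /=; lia. Qed.

Lemma pkw_down w : forall x k, k <= pkw (x :: w) ->
  exists w', size w' = size w /\ pkw (x :: w') = k.
Proof.
elim: w => [|y w IH] x k /=.
  by rewrite leqn0 => /eqP ->; exists [::].
move=> hk.
case: (leqP k (pkw (y :: w))) => hk2.
- have [w0 [h1 h2]] := IH true k (leq_trans hk2 (pkw_le_true y w)).
  exists (true :: w0); split; first by rewrite /= h1.
  by rewrite /= andbF add0n; case: w0 h1 h2 => //=.
- exists (y :: w); split => //.
  apply/eqP; rewrite eqn_leq hk /=.
  move: hk hk2; case: (x && ~~ y) => /=; lia.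
Qed.

Lemma des_down w k : k <= count negb w ->
  exists w', size w' = size w /\ count negb w' = k.
Proof.
move=> hk; exists (nseq k false ++ nseq (size w - k) true); split.
  rewrite size_cat !size_nseq; have := count_size negb w; lia.
by rewrite count_cat !count_nseq /=; lia.
Qed.

Lemma mkseq_cons T (f : nat -> T) n : mkseq f n.+1 = f 0 :: mkseq (fun i => f i.+1) n.
Proof. by rewrite /mkseq /= -[1]/(1 + 0) iotaDl -map_comp. Qed.

Section Chain.
Variables (K : nat) (Al : pred 'I_K) (rv : bool -> 'I_K -> 'I_K -> bool).

Fixpoint Cc (r : nat -> bool) (n : nat) (a : 'I_K) : nat :=
  if n is n'.+1 then \sum_(b : 'I_K | Al b) rv (r 0) a b * Cc (fun i => r i.+1) n' b
  else 1.

Definition chainb n (r : nat -> bool) (h : {ffun 'I_n -> 'I_K}) : bool :=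
  [forall i : 'I_n, forall j : 'I_n, (j == i.+1 :> nat) ==> rv (r i) (h i) (h j)].

Definition fcons n (a : 'I_K) (g : {ffun 'I_n -> 'I_K}) : {ffun 'I_n.+1 -> 'I_K} :=
  [ffun i => if unlift ord0 i is Some j then g j else a].
Definition ftail n (f : {ffun 'I_n.+1 -> 'I_K}) : {ffun 'I_n -> 'I_K} :=
  [ffun j => f (lift ord0 j)].

Lemma fcons0 n a (g : {ffun 'I_n -> 'I_K}) : fcons a g ord0 = a.
Proof. by rewrite ffunE unlift_none. Qed.
Lemma fconsS n a (g : {ffun 'I_n -> 'I_K}) j : fcons a g (lift ord0 j) = g j.
Proof. by rewrite ffunE liftK. Qed.

Lemma sum_fcons n (F : {ffun 'I_n.+1 -> 'I_K} -> nat) :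
  \sum_(f : {ffun 'I_n.+1 -> 'I_K}) F f =
  \sum_(a : 'I_K) \sum_(g : {ffun 'I_n -> 'I_K}) F (fcons a g).
Proof.
rewrite pair_big /=.
rewrite (reindex (fun p : 'I_K * {ffun 'I_n -> 'I_K} => fcons p.1 p.2)) //=.
apply: onW_bij; exists (fun f : {ffun 'I_n.+1 -> 'I_K} => (f ord0, ftail f)).
- by case=> a g /=; rewrite fcons0; congr (_, _); apply/ffunP => j; rewrite ffunE fconsS.
- move=> f; apply/ffunP => i; rewrite ffunE /=.
  by case: unliftP => [j ->|->]; rewrite ?ffunE.
Qed.

Lemma fconsAl n a (g : {ffun 'I_n -> 'I_K}) :
  [forall i, Al (fcons a g i)] = Al a && [forall i, Al (g i)].
Proof.
apply/forallP/andP => [H|[H1 /forallP H2] i].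
- split; first by have := H ord0; rewrite fcons0.
  by apply/forallP => j; have := H (lift ord0 j); rewrite fconsS.
- by case: (unliftP ord0 i) => [j ->|->]; rewrite ?fconsS ?fcons0.
Qed.

Lemma fconsC n r a (g : {ffun 'I_n.+1 -> 'I_K}) :
  chainb r (fcons a g) = rv (r 0) a (g ord0) && chainb (fun i => r i.+1) g.
Proof.
apply/forallP/andP => [H|[H1 /forallP H2] i].
- split.
    have := H ord0; move/forallP/(_ (lift ord0 ord0)) => /implyP; rewrite fcons0 fconsS.
    by apply.
  apply/forallP => i; apply/forallP => j; apply/implyP => hij.
  have := H (lift ord0 i); move/forallP/(_ (lift ord0 j)) => /implyP.
  by rewrite !fconsS; apply; rewrite /= /bump /= !add1n.
- apply/forallP => j; apply/implyP.
  case: (unliftP ord0 i) => [i' ->|->]; case: (unliftP ord0 j) => [j' ->|->] //=.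
  + rewrite /bump /= !add1n eqSS => hij; rewrite !fconsS.
    by have := H2 i'; move/forallP/(_ j')/implyP; apply.
  + rewrite /bump /= add1n eqSS => /eqP hj; rewrite fcons0 fconsS.
    have -> : j' = ord0 by apply/val_inj.
    by [].
Qed.

Lemma fconsC0 r a (g : {ffun 'I_0 -> 'I_K}) : chainb r (fcons a g) = true.
Proof.
apply/forallP => i; apply/forallP => j; apply/implyP.
by case: i j => [[|i] hi] [[|j] hj].
Qed.

Lemma sum_split_head n (F : {ffun 'I_n.+1 -> 'I_K} -> nat) :
  \sum_(g : {ffun 'I_n.+1 -> 'I_K}) F g =
  \sum_(b : 'I_K) \sum_(g : {ffun 'I_n.+1 -> 'I_K}) (g ord0 == b) * F g.
Proof.
rewrite exchange_big /=; apply: eq_bigr => g _.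
rewrite (bigD1 (g ord0)) //= eqxx mul1n big1 ?addn0 // => b /negbTE hb.
by rewrite eq_sym hb.
Qed.

Lemma chain_count n : forall r a,
  \sum_(h : {ffun 'I_n.+1 -> 'I_K}) ((h ord0 == a) && [forall i, Al (h i)] && chainb r h)
  = Al a * Cc r n a.
Proof.
elim: n => [|n IH] r a.
- rewrite sum_fcons (bigD1 a) //= [X in _ + X]big1 ?addn0; last first.
    by move=> a' ha'; apply: big1 => g _; rewrite fcons0 (negbTE ha').
  under eq_bigr do rewrite fcons0 fconsAl fconsC0 eqxx andbT /=.
  have E : forall g : {ffun 'I_0 -> 'I_K}, [forall i, Al (g i)] = true.
    by move=> g; apply/forallP => -[].
  under eq_bigr do rewrite E andbT.
  rewrite sum_nat_const card_ffun !card_ord /=; case: (Al a) => //.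
- rewrite (sum_fcons (fun h : {ffun 'I_n.+2 -> 'I_K} => ((h ord0 == a) && [forall i, Al (h i)] && chainb r h : nat))).
  rewrite (bigD1 a) //= [X in _ + X]big1 ?addn0; last first.
    by move=> a' ha'; apply: big1 => g _; rewrite fcons0 (negbTE ha').
  under eq_bigr do rewrite fcons0 fconsAl fconsC eqxx /=.
  rewrite big_distrr /= sum_split_head [RHS]big_mkcond /=; apply: eq_bigr => b _.
  rewrite (eq_bigr (fun g : {ffun 'I_n.+1 -> 'I_K} => Al a * rv (r 0) a b *
     ((g ord0 == b) && [forall i, Al (g i)] && chainb (fun i => r i.+1) g))); last first.
    move=> g _; case: eqP => [->|] /=; last by rewrite muln0.
    by case: (Al a); case: (rv (r 0) a b); case: [forall i, Al (g i)]; case: chainb.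
  rewrite -big_distrr /= IH.
  by case: (Al b); rewrite /= ?muln0 ?mul1n ?mulnA //.
Qed.
End Chain.

Lemma card_chain K (Al : pred 'I_K) rv n r :
  #|[set h : {ffun 'I_n.+1 -> 'I_K} | [forall i, Al (h i)] && chainb rv r h]| =
  \sum_(a | Al a) Cc Al rv r n a.
Proof.
rewrite -sum1_card big_mkcond /=.
transitivity (\sum_(h : {ffun 'I_n.+1 -> 'I_K}) \sum_(a : 'I_K)
    ((h ord0 == a) && [forall i, Al (h i)] && chainb rv r h : nat)).
  apply: eq_bigr => h _; rewrite inE (bigD1 (h ord0)) //= eqxx big1 ?addn0 /=.
    by case: ([forall i, Al (h i)] && chainb rv r h).
  by move=> b /negbTE hb; rewrite eq_sym hb.
rewrite exchange_big /= [RHS]big_mkcond /=; apply: eq_bigr => a _.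
by rewrite chain_count; case: (Al a); rewrite ?mul1n.
Qed.

Section KeyMap.
Variables (K : nat) (Al : pred 'I_K) (rv : bool -> 'I_K -> 'I_K -> bool).
Variables (k : 'I_K -> nat) (R : bool -> nat -> nat -> bool) (T lo : nat) (xe : bool).
Hypothesis Hrel : forall x a b, Al a -> Al b -> rv x a b = R x (k a) (k b).
Hypothesis Hinj : {in Al &, injective k}.
Hypothesis Hlt : forall a, Al a -> lo <= k a < T.
Hypothesis Hsurj : forall c, lo <= c < T -> exists a, Al a /\ k a = c.
Hypothesis Hmono : forall x a c, c < a -> R x a c = false.
Hypothesis HT : R xe T T = false.
Hypothesis HxeT : forall c, c < T -> R xe c T.
Hypothesis HloT : lo <= T.

Definition dT (c : nat) : nat := (c == T).

Lemma opw_T w : opw R T.+1 (rcons w xe) dT T = 0.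
Proof.
elim: w => [|x w IH] /=.
  by apply: big1 => c _; rewrite /dT; case: eqP => [->|_]; rewrite ?HT ?muln0.
apply: big1 => c _; have := ltn_ord c; rewrite ltnS leq_eqVlt => /orP [/eqP ->|h].
  by rewrite IH muln0.
by rewrite Hmono.
Qed.

Lemma reindexK (f : nat -> nat) : f T = 0 -> (forall c, c < lo -> f c = 0) ->
  \sum_(c < T.+1) f c = \sum_(a | Al a) f (k a).
Proof.
move=> fT flo.
pose h := fun a : 'I_K => (inord (k a) : 'I_T.+1).
have hk a : Al a -> (h a : nat) = k a.
  by move=> ha; rewrite /h inordK //; have := Hlt ha; lia.
rewrite (bigID (fun c => c \in h @: [set a | Al a])) /=.
rewrite [X in _ + X]big1 ?addn0; last first.
  move=> c hc; case: (ltnP c lo) => h1; first exact: flo.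
  have := ltn_ord c; rewrite ltnS leq_eqVlt => /orP [/eqP ->|h2]; first by [].
  have [a [ha hka]] := Hsurj (c := c) (ltac:(lia)).
  exfalso; move/negP: hc; apply; apply/imsetP; exists a; first by rewrite inE.
  by apply/eqP; rewrite -val_eqE /= hk // hka.
rewrite big_imset /=; last first.
  move=> a b; rewrite !inE => ha hb /(congr1 val) /=; rewrite !hk //.
  exact: Hinj.
rewrite [RHS]big_mkcond [LHS]big_mkcond /=; apply: eq_bigr => a _.
rewrite inE; case ha: (Al a) => //.
by rewrite hk.
Qed.

Lemma Cc_opw n : forall r a, Al a ->
  Cc Al rv r n a = opw R T.+1 (rcons (mkseq r n) xe) dT (k a).
Proof.
elim: n => [|n IH] r a ha.
  rewrite /= /step /dT; have := Hlt ha => /andP [_ hT].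
  rewrite (eq_bigr (fun c : 'I_T.+1 => (val c == T) * R xe (k a) c)); last first.
    by move=> c _; rewrite mulnC.
  by rewrite (sum_eq1 (fun c => R xe (k a) c)) // HxeT.
rewrite mkseq_cons rcons_cons.
change (Cc Al rv r n.+1 a = step R T.+1 (r 0)
          (opw R T.+1 (rcons (mkseq (fun i => r i.+1) n) xe) dT) (k a)).
rewrite /step (@reindexK (fun c => R (r 0) (k a) c *
           opw R T.+1 (rcons (mkseq (fun i => r i.+1) n) xe) dT c)).
- by rewrite /=; apply: eq_bigr => b hb; rewrite Hrel // IH.
- by rewrite opw_T muln0.
- by move=> c hc; rewrite Hmono //; have := Hlt ha; lia.
Qed.

Lemma total_opw n r x0 s : (forall c, c < T -> R x0 s c = (lo <= c)) ->
  \sum_(a | Al a) Cc Al rv r n a = opw R T.+1 (x0 :: rcons (mkseq r n) xe) dT s.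
Proof.
move=> Hs.
change (\sum_(a | Al a) Cc Al rv r n a =
   \sum_(c < T.+1) R x0 s c * opw R T.+1 (rcons (mkseq r n) xe) dT c).
rewrite (@reindexK (fun c => R x0 s c * opw R T.+1 (rcons (mkseq r n) xe) dT c)).
- apply: eq_bigr => a ha; rewrite Cc_opw // Hs; last by have := Hlt ha; lia.
  by have := Hlt ha => /andP [-> _]; rewrite mul1n.
- by rewrite opw_T muln0.
- by move=> c hc; rewrite Hs ?(leqNgt lo) ?hc //; lia.
Qed.
End KeyMap.

Import Order.TTheory GRing.Theory Num.Theory.

Definition rvz (m : nat) (x : bool) (a b : 'I_(2 * m + 1)) : bool :=
  if x then zprec_plus (dec a) (dec b) else zprec_minus (dec a) (dec b).
Arguments rvz m x a b : clear implicits.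
Definition asc n (pi : 'S_n.+1) (i : nat) : bool := (pi (inord i) < pi (inord i.+1))%N.
Definition word n (pi : 'S_n.+1) := mkseq (asc pi) n.

Lemma pi_chain n (pi : 'S_n.+1) m (g : {ffun 'I_n.+1 -> 'I_(2 * m + 1)}) :
  is_pi_partition pi (fun i => dec (g i)) =
  chainb (rvz m) (asc pi) [ffun i => g (pi i)].
Proof.
rewrite /is_pi_partition /chainb; apply: eq_forallb => i; apply: eq_forallb => j.
case hj: (j == i.+1 :> nat) => //=.
rewrite !ffunE /rvz /asc.
have -> : inord i = i by apply: val_inj; rewrite /= inordK.
have -> : inord i.+1 = j by apply: val_inj; rewrite /= -(eqP hj) inordK // (eqP hj).
by [].
Qed.

Lemma card_pi n (pi : 'S_n.+1) m (Al : pred 'I_(2 * m + 1)) :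
  #|[set g : {ffun 'I_n.+1 -> 'I_(2 * m + 1)} |
      is_pi_partition pi (fun i => dec (g i)) && [forall i, Al (g i)]]| =
  #|[set h : {ffun 'I_n.+1 -> 'I_(2 * m + 1)} | [forall i, Al (h i)] && chainb (rvz m) (asc pi) h]|.
Proof.
pose F (g : {ffun 'I_n.+1 -> 'I_(2 * m + 1)}) : {ffun 'I_n.+1 -> 'I_(2 * m + 1)} :=
  [ffun i => g (pi i)].
have Finj : injective F.
  move=> g1 g2 /ffunP H; apply/ffunP => j.
  by have := H ((pi^-1)%g j); rewrite !ffunE permKV.
rewrite -(card_imset _ Finj); apply: eq_card => h; rewrite [RHS]inE.
apply/imsetP/idP.
- case=> g; rewrite inE => /andP [hp ha] ->.
  rewrite -pi_chain hp andbT; apply/forallP => i; rewrite ffunE.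
  exact: (forallP ha).
- move=> /andP [ha hc]; exists [ffun i => h ((pi^-1)%g i)].
    rewrite inE pi_chain.
    have -> : [ffun i => [ffun i0 => h ((pi^-1)%g i0)] (pi i)] = h.
      by apply/ffunP => i; rewrite !ffunE permK.
    rewrite hc /=; apply/forallP => i; rewrite ffunE; exact: (forallP ha).
  by apply/ffunP => i; rewrite !ffunE permK.
Qed.

Lemma zkey_odd z : odd (zkey z) = (z < 0)%R.
Proof. rewrite /zkey; case: ifP; lia. Qed.
Lemma zkey_inj u v : zkey u = zkey v -> u = v.
Proof. rewrite /zkey; do 2 case: ifP; lia. Qed.
Lemma zkey_le m (a : 'I_(2 * m + 1)) : zkey (dec a) <= 2 * m.
Proof. rewrite /zkey /dec; have := ltn_ord a; case: ifP; lia. Qed.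
Lemma zkey_eq0 z : (zkey z == 0) = (z == 0%R).
Proof. rewrite /zkey; case: ifP; lia. Qed.
Lemma decI m (a b : 'I_(2 * m + 1)) : dec a = dec b -> a = b.
Proof. rewrite /dec => h; apply: val_inj => /=; lia. Qed.
Lemma zkey_surj m j : j <= 2 * m -> exists a : 'I_(2 * m + 1), zkey (dec a) = j.
Proof.
move=> hj; have hq := odd_double_half j; move: hq; rewrite -muln2.
set q := j./2; case: (odd j) => /= hq.
- have hlt : m - q.+1 < 2 * m + 1 by lia.
  by exists (Ordinal hlt); rewrite /zkey /dec /=; case: ifP; lia.
- have hlt : m + q < 2 * m + 1 by lia.
  by exists (Ordinal hlt); rewrite /zkey /dec /=; case: ifP; lia.
Qed.

Lemma rvz_Pr m x (a b : 'I_(2 * m + 1)) : rvz m x a b = Pr x (zkey (dec a)) (zkey (dec b)).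
Proof.
rewrite /rvz /zprec_plus /zprec_minus /zlt /Pr zkey_odd.
have E : (dec a == dec b) = (zkey (dec a) == zkey (dec b)).
  apply/eqP/eqP => [->|]; [by [] | exact: zkey_inj].
rewrite -E; case: x; case: eqP => [->|] //=; rewrite ?andbF ?orbF ?ltnn //=.
- by case: (dec b < 0)%R / (ltP (dec b) 0%R) => /=; lia.
- by case: (dec b < 0)%R.
Qed.

Lemma Pr_shift2 x a b : Pr x a.+2 b.+2 = Pr x a b.
Proof. rewrite /Pr; lia. Qed.

Lemma rvz_Pl m x (a b : 'I_(2 * m + 1)) : (0 < dec a)%R -> (0 < dec b)%R ->
  rvz m x a b = Pl x `|dec a|%N `|dec b|%N.
Proof. rewrite /rvz /zprec_plus /zprec_minus /zlt /Pl /zkey; case: x; do 2 case: ifP; lia. Qed.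

Lemma iotaS0 n : iota 0 n.+1 = 0 :: map succn (iota 0 n).
Proof. by rewrite /= -[1]/(1 + 0) iotaDl. Qed.

Lemma card_iota M (P : nat -> bool) : #|[set i : 'I_M | P i]| = count P (iota 0 M).
Proof.
rewrite -sum1_card; transitivity (\sum_(i < M | P i) 1).
  by apply: eq_bigl => i; rewrite inE.
by rewrite -(big_mkord P (fun _ => 1)) sum1_count /index_iota subn0.
Qed.

Lemma count_lt (f : nat -> bool) L M : L <= M ->
  count (fun i => (i < L) && f i) (iota 0 M) = count f (iota 0 L).
Proof.
move=> h; rewrite -(subnKC h) iotaD count_cat add0n.
rewrite (@eq_in_count _ _ f); last by move=> i; rewrite mem_iota => /andP [_ ->].
rewrite [X in _ + X](@eq_in_count _ _ pred0) ?count_pred0 ?addn0 //.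
by move=> i; rewrite mem_iota => /andP [hi _]; rewrite /= ltnNge hi.
Qed.

Lemma inord_val' n (i : 'I_n.+1) : inord i = i.
Proof. by apply: val_inj; rewrite /= inordK. Qed.

Lemma exists_next n (pi : 'S_n.+1) (i : 'I_n.+1) :
  [exists j : 'I_n.+1, (j == i.+1 :> nat) && (pi j < pi i)] = (i < n) && ~~ asc pi i.
Proof.
rewrite /asc inord_val'.
apply/existsP/andP => [[j /andP [/eqP hj hlt]]|[hi ha]].
- have ej : inord i.+1 = j by apply: val_inj; rewrite /= inordK -hj ?ltn_ord.
  split; first by have := ltn_ord j; rewrite hj ltnS.
  by rewrite ej -leqNgt ltnW.
- have hi' : i.+1 < n.+1 by rewrite ltnS.
  exists (inord i.+1); rewrite inordK // eqxx /=.
  rewrite -leqNgt in ha; rewrite ltn_neqAle ha andbT.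
  apply/negP => /eqP /val_inj /perm_inj /(congr1 val); rewrite /= inordK // => e.
  by move: e; case: (nat_of_ord i) => //=; lia.
Qed.

Lemma exists_prev n (pi : 'S_n.+1) (i : 'I_n.+1) :
  [exists h : 'I_n.+1, (h.+1 == i :> nat) && (pi h < pi i)] = (0 < i) && asc pi i.-1.
Proof.
rewrite /asc.
apply/existsP/andP => [[h /andP [/eqP hh hlt]]|[hi ha]].
- move: hh hlt; case: h => h hh0 /= hh hlt.
  have hi0 : 0 < i by rewrite -hh.
  split => //.
  have e1 : inord i.-1 = Ordinal hh0 by apply: val_inj; rewrite /= inordK -hh.
  have e2 : inord i.-1.+1 = i by apply: val_inj; rewrite /= prednK // inordK.
  by rewrite e1 e2.
- have e1 : (inord i.-1 : 'I_n.+1) = i.-1 :> nat.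
    by rewrite inordK // (leq_ltn_trans (leq_pred _) (ltn_ord i)).
  exists (inord i.-1); rewrite e1 prednK // eqxx /=.
  have e2 : inord i.-1.+1 = i by apply: val_inj; rewrite /= prednK // inordK.
  by rewrite e2 in ha.
Qed.

Lemma des_word n (pi : 'S_n.+1) : des pi = count negb (word pi).
Proof.
rewrite /des (eq_card (B := [set i : 'I_n.+1 | (i < n) && ~~ asc pi i])); last first.
  by move=> i; rewrite !inE exists_next.
rewrite (card_iota _ (fun i => (i < n) && ~~ asc pi i)) count_lt // /word /mkseq count_map.
by apply: eq_count.
Qed.

Lemma pkw_mkseq f n : pkw (mkseq f n) = count (fun i => f i && ~~ f i.+1) (iota 0 n.-1).
Proof.
elim: n f => [|[|n] IH] f //.
rewrite mkseq_cons.
change (pkw (f 0 :: mkseq (fun i => f i.+1) n.+1)) with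
  ((f 0 && ~~ (fun i => f i.+1) 0) + pkw (mkseq (fun i => f i.+1) n.+1)).
rewrite IH /= -[1]/(1 + 0) iotaDl count_map.
by congr (_ + _); apply: eq_count.
Qed.

Lemma pk_word n (pi : 'S_n.+1) : pk pi = pkw (word pi).
Proof.
rewrite /pk (eq_card (B := [set i : 'I_n.+1 | (i < n) && ((0 < i) && asc pi i.-1 && ~~ asc pi i)])); last first.
  by move=> i; rewrite !inE exists_next exists_prev; case: (i < n); case: (0 < i); rewrite /= ?andbF ?andbT.
rewrite (card_iota _ (fun i => (i < n) && ((0 < i) && asc pi i.-1 && ~~ asc pi i))) count_lt // /word pkw_mkseq.
case: n pi => [|n] pi //.
rewrite iotaS0 /= count_map add0n.
by apply: eq_count.
Qed.

Lemma lpk_word n (pi : 'S_n.+1) : lpk pi = pkw (true :: word pi).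
Proof.
rewrite /lpk (eq_card (B := [set i : 'I_n.+1 | (i < n) && (((val i == 0) || asc pi i.-1) && ~~ asc pi i)])); last first.
  move=> i; rewrite !inE exists_next exists_prev.
  case: (i < n); rewrite /= ?andbF ?andbT //.
  by case: (nat_of_ord i) => [|j] /=; rewrite ?andbT.
rewrite (card_iota _ (fun i : nat => (i < n) && (((i == 0) || asc pi i.-1) && ~~ asc pi i))) count_lt //.
have -> : true :: word pi = mkseq (fun i => if i is i'.+1 then asc pi i' else true) n.+1.
  by rewrite mkseq_cons.
rewrite pkw_mkseq /=; apply: eq_count => -[|i] //=.
Qed.

Section Realize.
Variables (n : nat) (w : seq bool).
Hypothesis hw : size w = n.

Definition Sz (i : nat) : int := (\sum_(j < i) (if nth false w j then 1 else -1))%R.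
Definition Hz (i : 'I_n.+1) : int := (Sz i * n.+1%:Z + (i : nat)%:Z)%R.
Definition rk (i : 'I_n.+1) : nat := #|[set j : 'I_n.+1 | (Hz j < Hz i)%R]|.

Lemma Hz_inj : injective Hz.
Proof.
move=> i j; rewrite /Hz => e; apply: val_inj => /=.
have := ltn_ord i; have := ltn_ord j; move: e.
move: (Sz i) (Sz j) => a b; case: i j => [i hi] [j hj] /= e hj' hi'.
case: (ltgtP a b) => hab.
- have : ((a + 1) * n.+1%:Z <= b * n.+1%:Z)%R by rewrite ler_pM2r //; lia.
  lia.
- have : ((b + 1) * n.+1%:Z <= a * n.+1%:Z)%R by rewrite ler_pM2r //; lia.
  lia.
- subst b; lia.
Qed.

Lemma rk_lt i : rk i < n.+1.
Proof.
rewrite /rk; apply: (@leq_ltn_trans #|[set~ i]|).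
  apply: subset_leq_card; apply/subsetP => j; rewrite !inE.
  by apply: contraTneq => ->; rewrite ltxx.
by rewrite cardsC1 card_ord.
Qed.

Lemma rk_mono a b : (Hz a < Hz b)%R -> rk a < rk b.
Proof.
move=> h; apply: proper_card; apply/properP; split.
  by apply/subsetP => j; rewrite !inE => hj; apply: lt_trans hj h.
by exists a; rewrite !inE ?ltxx.
Qed.

Lemma rk_inj : injective rk.
Proof.
move=> a b e; apply: Hz_inj.
case: (ltgtP (Hz a) (Hz b)) => // h.
- by have := rk_mono h; rewrite e ltnn.
- by have := rk_mono h; rewrite e ltnn.
Qed.

Definition rkf (i : 'I_n.+1) : 'I_n.+1 := Ordinal (rk_lt i).
Lemma rkf_inj : injective rkf.
Proof. by move=> a b /(congr1 val) /= /rk_inj. Qed.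

Definition rpi : 'S_n.+1 := perm rkf_inj.

Lemma Hz_step i (hi : i < n) :
  Hz (inord i.+1) = (Hz (inord i) + (if nth false w i then n.+1%:Z else - n.+1%:Z) + 1)%R.
Proof.
rewrite /Hz !inordK //; last lia.
rewrite /Sz big_ord_recr /=.
set S := (\sum_(_ < i) _)%R.
case: (nth false w i); nia.
Qed.

Lemma rpi_word : word rpi = w.
Proof.
apply: (@eq_from_nth _ false); first by rewrite size_mkseq hw.
move=> i; rewrite size_mkseq => hi.
rewrite nth_mkseq // /asc !permE /=.
have := Hz_step hi; case: (nth false w i) => e.
- by apply: rk_mono; rewrite e; lia.
- apply/negbTE; rewrite -leqNgt; apply: ltnW; apply: rk_mono; rewrite e; lia.
Qed.
End Realize.

Lemma realize n (w : seq bool) : size w = n -> exists pi : 'S_n.+1, word pi = w.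
Proof. by move=> hw; exists (rpi hw); exact: rpi_word. Qed.

Lemma OmegaPi_word n (pi : 'S_n.+1) m :
  OmegaPi pi m = opw Pr (2 * m + 3).+1 (true :: rcons (word pi) true) (dT (2 * m + 3)) 1.
Proof.
rewrite /OmegaPi.
transitivity #|[set g : {ffun 'I_n.+1 -> 'I_(2 * m + 1)} |
   is_pi_partition pi (fun i => dec (g i)) && [forall i, predT (g i)]]|.
  apply: eq_card => g; rewrite !inE.
  have -> : [forall i, predT (g i)] = true by apply/forallP.
  by rewrite andbT.
rewrite card_pi card_chain.
apply: (@total_opw _ _ _ (fun a => (zkey (dec a)).+2) Pr (2 * m + 3) 2 true).
- by move=> x a b _ _; rewrite rvz_Pr Pr_shift2.
- by move=> a b _ _ e; apply: decI; apply: zkey_inj; lia.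
- by move=> a _; have := zkey_le a; lia.
- move=> c hc; have [|a ha] := @zkey_surj m (c - 2); first lia.
  by exists a; split => //; lia.
- by move=> x a c h; rewrite /Pr; lia.
- by rewrite /Pr; lia.
- by move=> c h; rewrite /Pr; lia.
- lia.
- by move=> c h; rewrite /Pr; lia.
Qed.

Lemma OmegaStarPi_word n (pi : 'S_n.+1) m :
  OmegaStarPi pi m = opw Pr (2 * m + 1).+1 (false :: rcons (word pi) true) (dT (2 * m + 1)) 0.
Proof.
rewrite /OmegaStarPi.
rewrite (card_pi pi (fun a : 'I_(2 * m + 1) => dec a != 0%R)).
rewrite (card_chain (fun a : 'I_(2 * m + 1) => dec a != 0%R) (rvz m) n (asc pi)).
apply: (@total_opw _ _ _ (fun a => zkey (dec a)) Pr (2 * m + 1) 1 true).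
- by move=> x a b _ _; rewrite rvz_Pr.
- by move=> a b _ _ e; apply: decI; apply: zkey_inj.
- move=> a ha; have := zkey_le a; have := zkey_eq0 (dec a); rewrite (negbTE ha).
  lia.
- move=> c hc; have [|a ha] := @zkey_surj m c; first lia.
  exists a; split => //; rewrite -zkey_eq0 ha; lia.
- by move=> x a c h; rewrite /Pr; lia.
- by rewrite /Pr; lia.
- by move=> c h; rewrite /Pr; lia.
- lia.
- by move=> c h; rewrite /Pr; lia.
Qed.

Lemma OmegaPlusPi_word n (pi : 'S_n.+1) m :
  OmegaPlusPi pi m = opw Pl m.+2 (false :: rcons (word pi) false) (dT m.+1) 0.
Proof.
rewrite /OmegaPlusPi.
rewrite (card_pi pi (fun a : 'I_(2 * m + 1) => (0 < dec a)%R)).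
rewrite (card_chain (fun a : 'I_(2 * m + 1) => (0 < dec a)%R) (rvz m) n (asc pi)).
apply: (@total_opw _ _ _ (fun a => `|dec a|%N) Pl m.+1 1 false).
- by move=> x a b ha hb; rewrite rvz_Pl.
- move=> a b ha hb e; apply: decI; move: ha hb e; rewrite !unfold_in /=; lia.
- by move=> a ha; move: ha (ltn_ord a); rewrite /dec; lia.
- move=> c hc.
  have hlt : m + c < 2 * m + 1 by lia.
  by exists (Ordinal hlt); rewrite /dec /=; split; lia.
- by move=> x a c h; rewrite /Pl; case: x; lia.
- by rewrite /Pl ltnn.
- by move=> c h; rewrite /Pl.
- lia.
- by move=> c h; rewrite /Pl; lia.
Qed.

Theorem lemma3p5 (n m k : nat) (hn : (0 < n)%N) :
  [/\ (Omega n k.+1 m <= Omega n k m)%N,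
      (OmegaStar n k.+1 m <= OmegaStar n k m)%N &
      (OmegaPlus n k.+1 m <= OmegaPlus n k m)%N].
Proof.
case: n hn => // n _.
split.
- rewrite /Omega; case: pickP => [pi1 /eqP h1|_]; last by [].
  have [w' [hs hw]] : exists w', size w' = size (word pi1) /\ pkw (true :: w') = k.
    by apply: pkw_down; rewrite -lpk_word h1.
  rewrite size_mkseq in hs.
  have [pi2 hpi2] := realize hs.
  case: pickP => [pi3 /eqP h3|H]; last first.
    by have := H pi2; rewrite lpk_word hpi2 hw eqxx.
  rewrite !OmegaPi_word; apply: PQ_main; first by rewrite !size_mkseq.
  by rewrite -!lpk_word h1 h3.
- have pkF : forall w, pkw (false :: w) = pkw w by case.
  rewrite /OmegaStar; case: pickP => [pi1 /eqP h1|_]; last by [].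
  have [w' [hs hw]] : exists w', size w' = size (word pi1) /\ pkw (false :: w') = k.
    by apply: pkw_down; rewrite pkF -pk_word h1.
  rewrite size_mkseq in hs.
  have [pi2 hpi2] := realize hs.
  case: pickP => [pi3 /eqP h3|H]; last first.
    by have := H pi2; rewrite pk_word hpi2 -pkF hw eqxx.
  rewrite !OmegaStarPi_word; apply: PQ_main; first by rewrite !size_mkseq.
  by rewrite !pkF -!pk_word h1 h3.
- rewrite /OmegaPlus; case: pickP => [pi1 /eqP h1|_]; last by [].
  have [w' [hs hw]] : exists w', size w' = size (word pi1) /\ count negb w' = k.
    by apply: des_down; rewrite -des_word h1.
  rewrite size_mkseq in hs.
  have [pi2 hpi2] := realize hs.
  case: pickP => [pi3 /eqP h3|H]; last first.
    by have := H pi2; rewrite des_word hpi2 hw eqxx.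
  rewrite !OmegaPlusPi_word; apply: Pl_main; first by rewrite /= !size_rcons !size_mkseq.
  rewrite /= -!cats1 !count_cat /= -!des_word h1 h3; lia.
Qed.
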